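(* Let $X$ be a separable Banach space over $\mathbb{K}\in\{\mathbb{R},\mathbb{C}\}$ and $T\colon X\to X$ a bounded linear operator. If there exists a uniformly Li-Yorke scrambled subset of $X$ which is locally residual, then the whole space $X$ is uniformly Li-Yorke scrambled for $T$.
   Context: A subset $S\subset X$ with at least two points is uniformly Li-Yorke scrambled for $T$ if there exist sequences $\{p_n\}$, $\{q_n\}$ in $\mathbb{N}$ such that for all distinct $x,y\in S$: $\lim_n\|T^{p_n}x-T^{p_n}y\|=0$ and $\lim_n\|T^{q_n}x-T^{q_n}y\|=\infty$. A subset $A\subset X$ is locally residual if there is a nonempty open $U\subset X$ such that $A\cap U$ is residual in $U$ (contains a dense $G_\delta$ subset of $U$). *)

(* Defs.v *)
From HB Require Import structures.
From mathcomp Require Import all_boot all_order all_algebra.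
From mathcomp Require Import all_classical all_reals all_analysis.
From mathcomp Require Import complex.
Set Implicit Arguments. Unset Strict Implicit. Unset Printing Implicit Defensive.
Import Order.TTheory GRing.Theory Num.Theory.
Import numFieldNormedType.Exports.
Local Open Scope classical_set_scope.
Local Open Scope ring_scope.

Definition separable_space (X : topologicalType) : Prop :=
  exists D : set X, countable D /\ closure D = setT.

Definition Gdelta_set (X : topologicalType) (G : set X) : Prop :=
  exists F : nat -> set X, (forall n, open (F n)) /\ G = \bigcap_n F n.

Definition locally_residual (X : topologicalType) (A : set X) : Prop :=
  exists U : set X, open U /\ U !=set0 /\
    exists G : set X, G `<=` A `&` U /\ Gdelta_set G /\ U `<=` closure G.

Definition uniformly_LiYorke_scrambled (K : numFieldType) (X : normedModType K)
    (T : X -> X) (S : set X) : Prop :=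
  (exists x y, S x /\ S y /\ x <> y) /\
  exists p q : nat -> nat, forall x y, S x -> S y -> x <> y ->
    ((fun n => `|iter (p n) T x - iter (p n) T y|) @ \oo --> (0 : K)) /\
    ((fun n => `|iter (q n) T x - iter (q n) T y|) @ \oo --> +oo).

(* Main.v *)
Require Import Defs.
From HB Require Import structures.
From mathcomp Require Import all_boot all_order all_algebra.
From mathcomp Require Import all_classical all_reals all_analysis.
From mathcomp Require Import complex.
Import Order.TTheory GRing.Theory Num.Theory.
Import numFieldNormedType.Exports.
Local Open Scope classical_set_scope.
Local Open Scope ring_scope.
Set Implicit Arguments. Unset Strict Implicit.
Section G.
Variable K : numFieldType.
Hypothesis arch : forall e : K, 0 < e -> exists n : nat, n.+1%:R^-1 < e.
Variable X : completeNormedModType K.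

Lemma open_ball_in (O : set X) x : open O -> O x -> exists2 e : K, 0 < e & ball x e `<=` O.
Proof.
move=> oO Ox.
have : nbhs x O by apply: open_nbhs_nbhs; split.
by move/nbhs_ballP => [e e0 H]; exists e.
Qed.

Lemma ballc (x : X) (e : K) : 0 < e -> ball x e x.
Proof. by move=> e0; rewrite -ball_normE /ball_ /= subrr normr0. Qed.

Lemma small_rad (e c : K) : 0 < e -> 0 < c ->
  let s := (e^-1 + c)^-1 in 0 < s /\ s <= e /\ s <= c^-1.
Proof.
move=> e0 c0 s.
have h : 0 < e^-1 + c by rewrite addr_gt0 // invr_gt0.
split; first by rewrite invr_gt0.
split.
  rewrite -[X in _ <= X](invrK e) lef_pV2 ?posrE ?invr_gt0 //.
  by rewrite lerDl ltW.
by rewrite lef_pV2 ?posrE // lerDr ltW // invr_gt0.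
Qed.

Theorem BaireG (F : (set X)^nat) :
  (forall i, open (F i) /\ dense (F i)) -> dense (\bigcap_i (F i)).
Proof.
move=> odF D [y Dy] oD.
have [a0 [Da0 F0a0]] : (D `&` F 0%N) !=set0.
  by apply: (proj2 (odF 0%N)) => //; exists y.
have [e0 e0p B0] := open_ball_in (openI oD (proj1 (odF 0%N))) (conj Da0 F0a0).
pose P (n : nat) (s s' : X * K) :=
  0 < s.2 -> [/\ 0 < s'.2, ball s'.1 (s'.2 + s'.2) `<=` ball s.1 s.2 `&` F n.+1
            & s'.2 <= n.+1%:R^-1].
have Ar : forall ns : nat * (X * K), exists s', P ns.1 ns.2 s'.
  move=> [n [a r]] /=.
  case: (boolP (0 < r)) => r0; last by exists (a, r) => /= h; rewrite h in r0.
  have [b [Bb Fb]] : (ball a r `&` F n.+1) !=set0.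
    apply: (proj2 (odF n.+1)); last exact: ball_open.
    by exists a; apply: ballc.
  have [e ep Be] := open_ball_in (openI (ball_open a r) (proj1 (odF n.+1))) (conj Bb Fb).
  have c0 : 0 < n.+1%:R :> K by rewrite ltr0n.
  have [s0 [se sc]] := small_rad ep c0.
  exists (b, (e^-1 + n.+1%:R)^-1 / 2) => _ /=; split.
  - by rewrite divr_gt0.
  - by rewrite -splitr; apply: subset_trans Be; apply: le_ball.

  - apply: le_trans sc; rewrite ler_pdivrMr // ler_peMr ?ltW //.
    by rewrite ?ltr1n ?ler1n.
have [f Pf] := choice Ar.
pose fix ar n := if n is p.+1 then f (p, ar p) else (a0, e0 / 2).
pose a := fun n => (ar n).1.
pose r := fun n => (ar n).2.
have Pn n : P n (ar n) (ar n.+1) by exact: (Pf (n, ar n)).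
have rpos n : 0 < r n.
  elim: n => [|n IH]; first by rewrite /r /= divr_gt0.
  by have [] := Pn n IH.
have Step n : ball (a n.+1) (r n.+1 + r n.+1) `<=` ball (a n) (r n) `&` F n.+1.
  by have [] := Pn n (rpos n).
have rsmall n : r n.+1 <= n.+1%:R^-1 by have [] := Pn n (rpos n).
have Suite n m : (n <= m)%N -> ball (a m) (r m) `<=` ball (a n) (r n).
  elim: m => [|k iHk]; first by rewrite leqn0 => /eqP ->.
  rewrite leq_eqVlt => /orP[/eqP -> //|/iHk]; apply: subset_trans.
  move=> z Bz; have := Step k z; case.
    by apply: (le_ball _ Bz); rewrite lerDl ltW.
  by [].
have inb n m : (n <= m)%N -> ball (a n) (r n) (a m).
  by move=> nm; apply: (Suite n m nm); apply: ballc.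
have : cvg (a @ \oo).
  apply: cauchy_cvg; apply: cauchy_exP => e e0'.
  have [N hN] := arch e0'.
  exists (a N.+1); exists N.+1 => // m /= Nm.
  apply: (le_ball _ (inb _ _ Nm)).
  exact: ltW (le_lt_trans (rsmall N) hN).
move=> /cvg_ex [l Hl].
have Bl n : ball (a n) (r n + r n) l.
  have := cvg_ball Hl (rpos n).
  move=> [M _ HM].
  have := HM (maxn M n) (leq_maxl M n).
  move=> /ball_sym Bm.
  exact: ball_triangle (inb _ _ (leq_maxr M n)) Bm.
exists l; split.
  have := Bl 0%N; rewrite /r /= -splitr => /B0 [] //.
move=> i _; case: i => [|n].
  by have := Bl 0%N; rewrite /r /= -splitr => /B0 [].
by have [] := Step n l (Bl n.+1).
Qed.

Lemma open_shift (A : set X) (w : X) : open A -> open [set u | A (u + w)].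
Proof.
move=> oA; rewrite openE => u /= Au.
have [e e0 Be] := open_ball_in oA Au.
apply/nbhs_ballP; exists e => // v Buv; apply: Be.
move: Buv; rewrite -!ball_normE /ball_ /=.
by rewrite opprD addrACA subrr addr0.
Qed.

Lemma key (S : set X) (z : X) : locally_residual S -> z != 0 ->
  exists c a b, S a /\ S b /\ a <> b /\ z = c *: (a - b).
Proof.
move=> [U [oU [[x0 Ux0] [G [GS [[F [oF GE]] UG]]]]]] z0.
have [r r0 BU] := open_ball_in oU Ux0.
pose r2 := r / 2.
have r20 : 0 < r2 by rewrite divr_gt0.
have rr : r2 + r2 = r by rewrite /r2 -splitr.
have nz : 0 < `|z| by rewrite normr_gt0.
pose t := r2 / 2 / `|z|.
have t0 : 0 < t by rewrite !divr_gt0.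
pose w := t *: z.
have nw : `|w| = r2 / 2.
  by rewrite normrZ gtr0_norm // /t divfK // normr_eq0.
have wlt : `|w| < r2.
  by rewrite nw ltr_pdivrMr // ltr_pMr // ?ltr1n.
have hit : forall O y, open O -> O y -> U y -> exists g, G g /\ O g.
  move=> O y oO Oy Uy.
  have [g [Gg Og]] := UG y Uy O (open_nbhs_nbhs (conj oO Oy)).
  by exists g.
pose V := ball x0 r2.
have VU : V `<=` U.
  move=> y Vy; apply: BU; apply: (le_ball _ Vy).
  by rewrite -rr lerDl ltW.
have VwU : forall y, V y -> U (y - w).
  move=> y Vy; apply: BU; rewrite -rr.
  apply: (ball_triangle Vy).
  rewrite -ball_normE /ball_ /=.
  by rewrite opprB addrC subrK.
have GF : forall n g, G g -> F n g by move=> n g; rewrite GE => /(_ n I).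
pose W n := [set u | (F n u /\ F n (u - w)) \/ ~ closure V u].
have oW n : open (W n).
  apply: (@openU _ (F n `&` [set u | F n (u + - w)]) (~` closure V)).
    apply: openI; first exact: oF.
    exact: open_shift (oF n).
  by apply: closed_openC; apply: closed_closure.
have dW n : dense (W n).
  move=> O [y Oy] oO.
  case: (pselect (closure V y)) => cy; last by exists y; split=> //; right.
  have [y1 [Vy1 Oy1]] := cy O (open_nbhs_nbhs (conj oO Oy)).
  have [g [Gg [Og Vg]]] := hit (O `&` V) y1 (openI oO (ball_open _ _))
      (conj Oy1 Vy1) (VU _ Vy1).
  pose O' := O `&` V `&` F n.
  have oO' : open O' by apply: openI; [apply: openI => //; exact: ball_open|].
  have [g3 [Gg3 O'g3]] : exists g3, G g3 /\ O' (g3 + w).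
    apply: (hit [set u | O' (u + w)] (g - w)).
    - exact: open_shift.
    - by rewrite /= subrK; split; [split|apply: GF].
    - exact: VwU.
  exists (g3 + w); split; first by case: O'g3 => [[]].
  left; split; first by case: O'g3.
  by rewrite addrK; apply: GF.
have [a [Va Wa]] : (V `&` \bigcap_n W n) !=set0.
  apply: (BaireG (fun n => conj (oW n) (dW n))).
    by exists x0; apply: ballc.
  exact: ball_open.
have FW n : F n a /\ F n (a - w).
  case: (Wa n I) => // /(_ (subset_closure Va)) [].
have Ga : G a by rewrite GE => n _; case: (FW n).
have Gaw : G (a - w) by rewrite GE => n _; case: (FW n).
exists t^-1, a, (a - w); split; first exact: (GS _ Ga).1.
split; first exact: (GS _ Gaw).1.
split.
  move=> /eqP; rewrite eq_sym subr_eq addrC -subr_eq subrr eq_sym.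
  rewrite scaler_eq0 (negbTE z0) orbF gt_eqF //.
by rewrite opprB addrC subrK scalerA mulVf ?gt_eqF // scale1r.
Qed.

Lemma iterB (T : {linear X -> X}) n x y : iter n T (x - y) = iter n T x - iter n T y.
Proof. by elim: n => //= n IH; rewrite IH linearB. Qed.

Lemma iterZ (T : {linear X -> X}) n (c : K) x : iter n T (c *: x) = c *: iter n T x.
Proof. by elim: n => //= n IH; rewrite IH linearZ. Qed.

Lemma mainG (T : {linear X -> X}) :
  (exists S : set X, uniformly_LiYorke_scrambled T S /\ locally_residual S) ->
  uniformly_LiYorke_scrambled T setT.
Proof.
move=> [S [[[x [y [Sx [Sy xy]]]] [p [q Hpq]]] lr]].
split; first by exists x, y.
exists p, q => u v _ _ uv.
have z0 : u - v != 0 by rewrite subr_eq0; apply/eqP.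
have [c [a [b [Sa [Sb [ab E]]]]]] := key lr z0.
have [H0 Hoo] := Hpq a b Sa Sb ab.
have eqf : forall n, `|iter n T u - iter n T v| = `|c| * `|iter n T a - iter n T b|.
  by move=> n; rewrite -iterB E iterZ normrZ iterB.
have c0 : c != 0 by apply: contra z0 => /eqP c0; rewrite E c0 scale0r.
have cp : 0 < `|c| by rewrite normr_gt0.
split.
  rewrite (_ : (fun n => _) = (fun n => `|c| * `|iter (p n) T a - iter (p n) T b|));
    last by apply: funext => n; exact: eqf.
  by rewrite -(mulr0 `|c|); apply: cvgMl_tmp.
rewrite cvgryPger => A Areal.
have Ar : A / `|c| \is Num.real by rewrite rpredM // rpredV normr_real.
apply: filterS (cvgry_ger Hoo Ar) => n /= hn; rewrite eqf.
have -> : A = `|c| * (A / `|c|) by rewrite mulrC divfK // normr_eq0.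
by rewrite ler_pM2l.
Qed.
End G.

Lemma archR (R : realType) (e : R) : 0 < e -> exists n : nat, n.+1%:R^-1 < e.
Proof.
move=> e0; exists (Num.truncn e^-1).
by rewrite -ltf_pV2 ?posrE ?invr_gt0 // invrK truncnS_gt.
Qed.

Local Open Scope complex_scope.
Lemma archC (R : realType) (e : R[i]) : 0 < e -> exists n : nat, n.+1%:R^-1 < e.
Proof.
move=> e0.
have := e0; rewrite ltcE /= => /andP [/eqP Ie Re0].
have [n hn] := archR Re0.
exists n.
have -> : e = (complex.Re e)%:C by rewrite [LHS]complexE Ie mulr0 addr0.
have -> : (n.+1%:R^-1 : R[i]) = (n.+1%:R^-1)%:C by rewrite fmorphV rmorph_nat.
by rewrite ltcR.
Qed.

Local Close Scope complex_scope.
Unset Implicit Arguments. Set Strict Implicit.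
Theorem proposition3p12 (R : realType) :
  (forall (X : completeNormedModType R) (T : {linear X -> X}),
     separable_space X -> continuous T ->
     (exists S : set X, uniformly_LiYorke_scrambled T S /\ locally_residual S) ->
     uniformly_LiYorke_scrambled T setT) /\
  (forall (X : completeNormedModType R[i]) (T : {linear X -> X}),
     separable_space X -> continuous T ->
     (exists S : set X, uniformly_LiYorke_scrambled T S /\ locally_residual S) ->
     uniformly_LiYorke_scrambled T setT).
Proof.
split => X T _ _; [exact: (mainG (@archR R)) | exact: (mainG (@archC R))].
Qed.
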